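(* If $(A_n)_{n=0}^\infty$ is an Appell sequence, then $A_n^{**}=A_n$ for all $n\geq0$.
   Context: An Appell sequence is a sequence of polynomials $(A_n)_{n\ge0}$ with $A_0=1$ and $A_n'=nA_{n-1}$ for $n\ge1$. For a partition $\lambda$ of length $r$, let $(n_1,\dots,n_r)=(\lambda_r,\lambda_{r-1}+1,\dots,\lambda_1+r-1)$ and $A_\lambda=\operatorname{Wr}[A_{n_1},\dots,A_{n_r}]/\Delta(n_1,\dots,n_r)$, where $\operatorname{Wr}$ is the Wronskian and $\Delta$ the Vandermonde determinant $\prod_{i<j}(x_j-x_i)$. The dual sequence $A^*$ is defined by $A^*_n=A_{(1^n)}$, with $(1^n)=(1,\dots,1)$ ($n$ ones); it is again an Appell sequence, and $A^{**}=(A^* )^*$. *)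

(* Defs.v *)
From mathcomp Require Import all_boot all_order all_algebra.
Set Implicit Arguments. Unset Strict Implicit. Unset Printing Implicit Defensive.
Import GRing.Theory.
Local Open Scope ring_scope.

Section Appell.
Variable R : fieldType.

Definition appell (A : nat -> {poly R}) : Prop :=
  A 0%N = 1 /\ forall n : nat, (A n.+1)^`() = (n.+1)%:R *: A n.

Definition wronskian (s : seq {poly R}) : {poly R} :=
  \det (\matrix_(i < size s, j < size s) (nth 0 s j)^`(i)).

Definition vandermonde (s : seq nat) : R :=
  \prod_(i < size s) \prod_(j < size s | (i < j)%N)
     ((nth 0%N s j)%:R - (nth 0%N s i)%:R).

Definition is_partition (la : seq nat) : bool :=
  sorted geq la && all (fun k => 0 < k)%N la.

Definition part_degrees (la : seq nat) : seq nat :=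
  [seq (nth 0%N la (size la - 1 - i) + i)%N | i <- iota 0 (size la)].

Definition appell_schur (A : nat -> {poly R}) (la : seq nat) : {poly R} :=
  let ns := part_degrees la in
  (vandermonde ns)^-1 *: wronskian (map A ns).

Definition appell_dual (A : nat -> {poly R}) : nat -> {poly R} :=
  fun n => appell_schur A (nseq n 1%N).

End Appell.

(* Main.v *)
Require Import Defs.
From mathcomp Require Import all_boot all_order all_algebra.
From mathcomp Require Import zify ring.
Set Implicit Arguments. Unset Strict Implicit. Unset Printing Implicit Defensive.
Import GRing.Theory.

Lemma prod_rev_fact n : (\prod_(i < n) (n - i) = n`!)%N.
Proof.
elim: n => [|n IH]; first by rewrite big_ord0.
by rewrite big_ord_recl subn0 factS -IH; congr (_ * _)%N; apply: eq_bigr => i _; rewrite /bump /= add1n subSS.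
Qed.

Lemma vdm_nat n :
  (\prod_(i < n) \prod_(j < n | (i < j)%N) (j - i) = \prod_(i < n) i`!)%N.
Proof.
elim: n => [|n IH]; first by rewrite !big_ord0.
rewrite !big_ord_recr /= (@big_pred0 _ _ _ _ _ (fun j : 'I_n.+1 => (n < j)%N)); last first.
  by move=> j; have := ltn_ord j; rewrite /= ltnS => /leq_gtF ->. 
rewrite muln1 -IH -prod_rev_fact -big_split /=; apply: eq_bigr => i _.
rewrite big_mkcond big_ord_recr /= ltn_ord -big_mkcond /=; congr (_ * _)%N.
Qed.

Lemma fact_prod_shift n :
  (\prod_(j < n) (j.+1)`! = n`! * \prod_(j < n) j`!)%N.
Proof.
elim: n => [|n IH]; first by rewrite !big_ord0.
rewrite !big_ord_recr /= IH factS; ring.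
Qed.

Local Open Scope ring_scope.

Section Det.
Variable T : comNzRingType.
Variable a : nat -> T.
Hypothesis a0 : a 0%N = 1.

Definition hh (i j : nat) : T := if (i <= j.+1)%N then a (j.+1 - i) else 0.
Definition gg (s : nat -> T) (i j : nat) : T := if i == 0%N then s j else hh i j.
Definition Dd n := \det (\matrix_(i < n, j < n) hh i j).
Definition Gd s n := \det (\matrix_(i < n, j < n) gg s i j).

Lemma Gd_step s n : Gd s n.+2 = s 0%N * Dd n.+1 - Gd (fun j => s j.+1) n.+1.
Proof.
rewrite /Gd (expand_det_col _ ord0) big_ord_recl big_ord_recl big1; last first.
  move=> i _; rewrite !mxE /gg /hh /=.
  by rewrite mul0r.
rewrite addr0 /cofactor !mxE /gg /hh /= a0 mul1r.
rewrite mul1r /bump /= expr1 mulN1r.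
congr (_ * _ + - _).
  congr (\det _); apply/matrixP => k l; rewrite !mxE /gg /hh /= /bump /= !add1n.
  by rewrite ltnS subSS.
congr (\det _); apply/matrixP => k l; rewrite !mxE /gg /hh /= /bump /=.
by case: k => [[|k] Hk].
Qed.

Lemma Gd_formula n s : Gd s n.+1 = \sum_(k < n.+1) (-1) ^+ k * s k * Dd (n - k).
Proof.
elim: n s => [|n IH] s.
  rewrite /Gd (expand_det_col _ ord0) !big_ord1 /cofactor !mxE /gg /= /Dd !det_mx00.
  by rewrite addn0 expr0 !mulr1 mul1r.
rewrite (Gd_step s n) IH [RHS]big_ord_recl expr0 mul1r subn0; congr (_ + _).
rewrite -sumrN; apply: eq_bigr => k _.
by rewrite /= exprS !mulN1r !mulNr subSS.
Qed.

Lemma Dd_conv n : \sum_(k < n.+1) (-1) ^+ k * a k * Dd (n - k) = (n == 0%N)%:R.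
Proof.
case: n => [|n]; first by rewrite big_ord1 /Dd det_mx00 a0 !mul1r.
rewrite big_ord_recl expr0 a0 !mul1r subn0.
have -> : Dd n.+1 = Gd (fun j => a j.+1) n.+1.
  rewrite /Dd /Gd; congr (\det _); apply/matrixP => i j; rewrite !mxE /gg /hh.
  by case: (i : nat) => [|i'] //=; rewrite subn0.
rewrite Gd_formula -big_split big1 //= => k _.
by rewrite /bump /= add1n exprS !mulN1r !mulNr subSS addrN.
Qed.
End Det.

Section Conv.
Variable R : fieldType.

Definition conv (c x : nat -> {poly R}) n := \sum_(k < n.+1) (-1) ^+ k * c k * x (n - k)%N.

Lemma conv_uniq c x y : c 0%N = 1 -> (forall n, conv c x n = conv c y n) -> forall n, x n = y n.
Proof.
move=> c0 H; elim/ltn_ind => n IH.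
have := H n; rewrite /conv !big_ord_recl expr0 c0 !mul1r subn0.
have -> : \sum_(i < n) (-1) ^+ bump 0 i * c (bump 0 i) * x (n - bump 0 i)%N =
          \sum_(i < n) (-1) ^+ bump 0 i * c (bump 0 i) * y (n - bump 0 i)%N.
  apply: eq_bigr => i _; rewrite IH //.
  have := ltn_ord i; rewrite /bump /=; lia.
by move/addIr.
Qed.

Lemma sign_sq k : (-1) ^+ k * (-1) ^+ k = 1 :> {poly R}.
Proof. by rewrite -exprD -signr_odd addnn odd_double expr0. Qed.

Lemma conv_rev a b n : conv a b n = (n == 0%N)%:R -> conv b a n = (n == 0%N)%:R.
Proof.
move=> H.
have E : conv b a n = (-1) ^+ n * conv a b n.
  rewrite /conv mulr_sumr (reindex_inj rev_ord_inj) /=; apply: eq_bigr => k _.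
  have kn : (k <= n)%N by have := ltn_ord k; lia.
  rewrite subSS subKn //.
  move: (nat_of_ord k) kn => {}k kn.
  rewrite -{3}(subnK kn) exprD.
  have := sign_sq k; move: ((-1) ^+ (n - k)) ((-1) ^+ k) => s1 s2 E.
  transitivity (s1 * (s2 * s2) * (a k * b (n - k)%N)); first by rewrite E mulr1; ring.
  ring.
rewrite E H; case: n {H E} => [|n]; by rewrite ?expr0 ?mul1r ?mulr0.
Qed.

Lemma dsign k (p : {poly R}) : ((-1) ^+ k * p)^`() = (-1) ^+ k * p^`().
Proof.
rewrite -signr_odd; case: (odd k); by rewrite ?expr1 ?expr0 ?mulN1r ?mul1r ?derivN.
Qed.

Lemma Dd_deriv (a : nat -> {poly R}) : a 0%N = 1 -> (forall k, (a k.+1)^`() = a k) ->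
  forall n, (Dd a n.+1)^`() = Dd a n.
Proof.
move=> a0 ad.
have D0 : (Dd a 0)^`() = 0 by rewrite /Dd det_mx00 -polyC1 derivC.
apply: (@conv_uniq a) => // n.
rewrite {2}/conv (Dd_conv a0 n).
have H := congr1 (@deriv _) (Dd_conv a0 n.+1).
rewrite raddf_sum /= deriv0 in H.
move: H; under eq_bigr do rewrite -mulrA dsign derivM mulrDr.
rewrite big_split /= big_ord_recl [X in _ + X = _ -> _]big_ord_recr /=.
rewrite subnn D0 !mulr0 addr0 /conv /=.
have d1 : (1 : {poly R})^`() = 0 by rewrite -polyC1 derivC.
rewrite a0 d1 mul0r mulr0 add0r.
have -> : \sum_(i < n.+1)
     (-1) ^+ bump 0 i * ((a (bump 0 i))^`() * Dd a (n.+1 - bump 0 i)) = - (n == 0%N)%:R.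
  rewrite -(Dd_conv a0 n) -sumrN; apply: eq_bigr => i _.
  by rewrite /bump /= add1n ad subSS exprS mulN1r mulNr mulrA.
have -> : \sum_(k < n.+1) (-1) ^+ k * a k * (Dd a (n - k).+1)^`() =
   \sum_(i < n.+1) (-1) ^+ i * (a i * (Dd a (n.+1 - i))^`()).
  apply: eq_bigr => i _; rewrite subSn ?mulrA //; have := ltn_ord i; lia.
move/eqP; rewrite addrC subr_eq0 => /eqP ->; done.
Qed.
End Conv.

Section Dual.
Variable R : fieldType.
Hypothesis charR0 : [pchar R] =i pred0.

Lemma pd_nseq n : part_degrees (nseq n 1%N) = iota 1 n.
Proof.
apply: (@eq_from_nth _ 0%N); first by rewrite /part_degrees size_map !size_iota size_nseq.
move=> i; rewrite /part_degrees size_map size_iota size_nseq => Hi.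
rewrite (nth_map 0%N) ?size_iota ?size_nseq // !nth_iota ?size_nseq // nth_nseq.
have -> : (n - 1 - (0 + i) < n)%N by lia.
lia.
Qed.

Lemma deriv_a (a : nat -> {poly R}) : a 0%N = 1 -> (forall k, (a k.+1)^`() = a k) ->
  forall i m, (a m)^`(i) = if (i <= m)%N then a (m - i)%N else 0.
Proof.
move=> a0 ad; elim => [|i IH] m; first by rewrite derivn0 subn0.
rewrite derivnS IH.
case: (ltngtP i m) => Him.
- have -> : (m - i = (m - i.+1).+1)%N by lia.
  by rewrite ad.
- by rewrite raddf0.
- by rewrite Him subnn a0 -polyC1 derivC.
Qed.

Lemma wr_formula (A a : nat -> {poly R}) : (forall k, A k = k`!%:R *: a k) ->
  a 0%N = 1 -> (forall k, (a k.+1)^`() = a k) -> forall n,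
  wronskian (map A (iota 1 n)) = Dd a n * (\prod_(j < n) (j.+1)`!)%:R.
Proof.
move=> HA a0 ad n.
rewrite /wronskian size_map size_iota.
have -> : (\matrix_(i < n, j < n) (nth 0 (map A (iota 1 n)) j)^`(i)) =
   (\matrix_(i < n, j < n) hh a i j) *m diag_mx (\row_(j < n) ((j.+1)`!)%:R).
  rewrite mul_mx_diag; apply/matrixP => i j; rewrite !mxE.
  rewrite (nth_map 0%N) ?size_iota // nth_iota // add1n HA derivnZ deriv_a //.
  by rewrite scaler_nat mulr_natr /hh.
by rewrite det_mulmx det_diag /Dd natr_prod; congr (_ * _); apply: eq_bigr => j _; rewrite mxE.
Qed.

Lemma vdm_formula n : vandermonde R (iota 1 n) = (\prod_(i < n) i`!)%:R.
Proof.
rewrite /vandermonde size_iota -vdm_nat natr_prod; apply: eq_bigr => i _.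
rewrite natr_prod; apply: eq_bigr => j Hij.
rewrite !nth_iota // natrB ?(ltnW Hij) // !natrD; ring.
Qed.

Lemma dual_formula (A a : nat -> {poly R}) : (forall k, A k = k`!%:R *: a k) ->
  a 0%N = 1 -> (forall k, (a k.+1)^`() = a k) -> forall n,
  appell_dual A n = n`!%:R *: Dd a n.
Proof.
move=> HA a0 ad n.
rewrite /appell_dual /appell_schur pd_nseq (wr_formula HA a0 ad) vdm_formula.
rewrite fact_prod_shift mulr_natr -scaler_nat scalerA natrM mulrCA mulVf ?mulr1 //.
move/GRing.pcharf0P: charR0 => ->.
by rewrite -lt0n prodn_gt0 // => i; exact: fact_gt0.
Qed.
End Dual.

Theorem corollary5p6 (R : fieldType) (charR0 : [pchar R] =i pred0)
  (A : nat -> {poly R}) :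
  appell A -> forall n : nat, appell_dual (appell_dual A) n = A n.
Proof.
move=> [A0 Ad] n.
have nz k : (k`!%:R : R) != 0.
  by move/GRing.pcharf0P: charR0 => ->; rewrite -lt0n fact_gt0.
pose a k := (k`!%:R : R)^-1 *: A k.
have HA k : A k = k`!%:R *: a k by rewrite /a scalerA divff // scale1r.
have a0 : a 0%N = 1 by rewrite /a A0 invr1 scale1r.
have ad k : (a k.+1)^`() = a k.
  rewrite /a derivZ Ad scalerA factS natrM invfM mulrAC mulVf ?mul1r //.
  by move/GRing.pcharf0P: charR0 => ->.
have H1 := dual_formula charR0 HA a0 ad.
have b0 : Dd a 0%N = 1 by rewrite /Dd det_mx00.
have H2 := dual_formula charR0 H1 b0 (Dd_deriv a0 ad).
rewrite H2 HA; congr (_ *: _).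
apply: (@conv_uniq _ (Dd a)) => // m.
rewrite [LHS]/conv Dd_conv //.
by rewrite (conv_rev (Dd_conv a0 m)).
Qed.
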